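(* Let $N_R\ge1$ and $N_s\ge2$ be integers and $\gamma>0$. Let $\Omega$ be an angular interval, $p$ a probability density on $\Omega$, and $\eta:\Omega\to(0,\infty)$ a measurable function (not depending on $L$). For each positive integer $L$ and $\phi\in\Omega$ let $p_{miss}(\phi)=\Pr\{X_{L,\phi}\le(N_s-1)\gamma\}$ where $X_{L,\phi}\sim\mathcal{F}(2N_RL,\,2N_RL(N_s-1),\,L\eta(\phi))$, and let $\bar p_{miss}=\int_\Omega p_{miss}(\phi)p(\phi)\,d\phi$. If there exist $\Omega^-\subset\Omega$ and $\eta^->0$ such that $\eta(\phi)\le\eta^-$ for all $\phi\in\Omega^-$ and $\int_{\Omega^-}p(\phi)\,d\phi>0$, then $$\lim_{L\to\infty}-\frac1L\log\bar p_{miss}\le I^*(\eta^-,\gamma)\qquad\text{if }\gamma<\frac{2N_R+\eta^-}{2N_R(N_s-1)},$$ where for $\eta>0$, $$I^*(\eta,\gamma)=\frac{\eta}{2}\left(1-\frac{\gamma v^*}{N_R+\sqrt{N_R^2+\gamma\eta v^*}}\right)+N_R(N_s-1)\log\frac{2N_R(N_s-1)}{v^*}-N_R\log\frac{\gamma v^*}{N_R+\sqrt{N_R^2+\gamma\eta v^*}},$$ with $v^*=\frac{x^{*2}-N_R^2}{\eta\gamma}$ and $x^*>0$ a solution of $\frac{\gamma+1}{\eta\gamma}(x^2-N_R^2)-x-N_R-2N_R(N_s-1)=0$.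
   Context: $\mathcal{F}(n_1,n_2,\lambda)$ denotes the noncentral F-distribution with degrees of freedom $n_1,n_2$ and noncentrality $\lambda$, i.e. the law of $(X_1/n_1)/(X_2/n_2)$ with $X_1$ noncentral chi-square ($n_1$ degrees of freedom, noncentrality $\lambda$) and $X_2$ an independent central chi-square with $n_2$ degrees of freedom. In the application, $\eta(\phi)$ is the normalised noncentrality parameter (proportional to the average transmit beamforming gain in direction $\phi$ divided by the path loss) of a user in direction $\phi$, $p_{miss}(\phi)$ is its miss-detection probability for the GLRT statistic with threshold $\gamma$, and $\bar p_{miss}$ is the average miss-detection probability over user directions. *)

(* Defs.v *)
From HB Require Import structures.
From mathcomp Require Import all_boot all_order all_algebra.
From mathcomp Require Import all_classical all_reals all_analysis.
Set Implicit Arguments. Unset Strict Implicit. Unset Printing Implicit Defensive.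
Import Order.TTheory GRing.Theory Num.Theory.
Import numFieldNormedType.Exports.
Local Open Scope classical_set_scope.
Local Open Scope ring_scope.

Section NoncentralF.
Variable R : realType.
Local Notation mu := (@lebesgue_measure R).

Definition Gamma_fn (a : R) : R :=
  fine (\int[mu]_(x in `]0%R, +oo[) ((x `^ (a - 1)) * expR (- x))%:E)%E.

Definition chi2_pdf (k : nat) (x : R) : R :=
  if 0 < x then
    x `^ (k%:R / 2 - 1) * expR (- x / 2) / (2 `^ (k%:R / 2) * Gamma_fn (k%:R / 2))
  else 0.

(* density of the noncentral chi-square law with k degrees of freedom and
   noncentrality lam (= sum of the squared means): Poisson(lam/2) mixture of
   central chi-square densities with k + 2j degrees of freedom *)
Definition ncchi2_pdf (k : nat) (lam : R) (x : R) : \bar R :=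
  (\sum_(0 <= j <oo)
     ((expR (- lam / 2) * (lam / 2) ^+ j / (j`!)%:R) * chi2_pdf (k + 2 * j) x)%:E)%E.

(* CDF of the noncentral F law F(n1, n2, lam) at t, i.e.
   Pr{ (X1/n1)/(X2/n2) <= t } with X1 ~ noncentral chi2(n1, lam) and
   X2 ~ central chi2(n2) independent (joint density = product). *)
Definition ncF_cdf (n1 n2 : nat) (lam t : R) : \bar R :=
  (\int[mu]_(y in `]0%R, +oo[)
     ((chi2_pdf n2 y)%:E *
      \int[mu]_(x in [set x : R | (0 < x)%R /\ ((x / n1%:R) / (y / n2%:R) <= t)%R])
         ncchi2_pdf n1 lam x))%E.

Definition p_miss (NR Ns L : nat) (gamma eta_phi : R) : \bar R :=
  ncF_cdf (2 * NR * L) (2 * NR * L * (Ns - 1)) (L%:R * eta_phi) ((Ns - 1)%:R * gamma).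

Definition pbar_miss (NR Ns L : nat) (gamma : R) (Omega : set R) (p eta : R -> R)
  : \bar R :=
  (\int[mu]_(phi in Omega) (p_miss NR Ns L gamma (eta phi) * (p phi)%:E))%E.

Definition Istar (NR Ns : nat) (eta gamma xs : R) : R :=
  let vs := (xs ^+ 2 - NR%:R ^+ 2) / (eta * gamma) in
  let q := gamma * vs / (NR%:R + Num.sqrt (NR%:R ^+ 2 + gamma * eta * vs)) in
  eta / 2 * (1 - q)
  + NR%:R * (Ns - 1)%:R * ln (2 * NR%:R * (Ns - 1)%:R / vs)
  - NR%:R * ln q.

End NoncentralF.

(* Main.v *)
From HB Require Import structures.
From mathcomp Require Import all_boot all_order all_algebra.
From mathcomp Require Import all_classical all_reals all_analysis.
From mathcomp Require Import ring lra.
Require Import Defs.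
From mathcomp Require Import measurable_realfun.
Import Order.TTheory GRing.Theory Num.Theory.
Import numFieldNormedType.Exports.
Local Open Scope classical_set_scope.
Local Open Scope ring_scope.

Section Helpers.
Variable R : realType.
Local Notation mu := (@lebesgue_measure R).

Lemma le_intT (f g : R -> \bar R) : (forall x, 0 <= f x)%E -> (forall x, f x <= g x)%E ->
  (\int[mu]_x f x <= \int[mu]_x g x)%E.
Proof.
move=> f0 fg; have g0 x : (0 <= g x)%E by apply: le_trans (f0 x) (fg x).
rewrite !ge0_integralTE //; apply: ereal_sup_le => _ [h /= hf <-].
by exists h => //= x; exact: le_trans (hf x) (fg x).
Qed.

Lemma int_lb (D I : set R) (f : R -> \bar R) (c : R) : measurable I -> I `<=` D ->
  (forall x, D x -> 0 <= f x)%E -> 0 <= c -> (forall x, I x -> c%:E <= f x)%E ->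
  (c%:E * mu I <= \int[mu]_(x in D) f x)%E.
Proof.
move=> mI ID f0 c0 cf.
rewrite -integral_cst // [X in (X <= _)%E]integral_mkcond [X in (_ <= X)%E]integral_mkcond.
apply: le_intT => x; rewrite /patch.
  by case: ifP => //; rewrite lee_fin.
case: ifP => [/[!inE] Ix|_]; first by rewrite ifT ?inE; [exact: cf | exact: ID].
by case: ifP => // /[!inE] Dx; exact: f0.
Qed.


Lemma ln_le_sub1 (x : R) : 0 < x -> ln x <= x - 1.
Proof.
move=> x0; have H := @le_ln1Dx R (x - 1).
by rewrite [1 + _]addrC subrK in H; apply: H; lra.
Qed.

Lemma powR_pos (x r : R) : 0 < x -> x `^ r = expR (r * ln x).
Proof. by move=> x0; rewrite /powR gt_eqF. Qed.

Lemma mu_box (a : R) : mu `[a, a + 1]%classic = 1%E.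
Proof.
rewrite lebesgue_measure_itv /= lte_fin ltrDl ltr01 -EFinB.
by rewrite addrC addKr.
Qed.

Lemma Gamma_bound (h : R) : 1 <= h -> 0 < Gamma_fn h <= expR (h * ln h - h + 1).
Proof.
move=> h1; have h0 : 0 < h by apply: lt_le_trans h1.
set f := fun x : R => ((x `^ (h - 1)) * expR (- x))%:E.
have f0 : forall x, `]0%R, +oo[%classic x -> (0 <= f x)%E.
  by move=> x _; rewrite lee_fin mulr_ge0 ?powR_ge0 ?expR_ge0.
have lo : ((expR (-2))%:E <= \int[mu]_(x in `]0%R, +oo[%classic) f x)%E.
  have := @int_lb `]0%R, +oo[%classic `[1, 1 + 1]%classic f (expR (-2)) _ _ f0 _ _.
  rewrite mu_box mule1; apply.
  - exact: measurable_itv.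
  - move=> x /=; rewrite !in_itv /= andbT => /andP[+ _]; exact: lt_le_trans.
  - exact: expR_ge0.
  - move=> x /=; rewrite in_itv /= => /andP[x1 x2].
    rewrite /f lee_fin powR_pos; last exact: lt_le_trans x1.
    rewrite -[expR (-2)]mul1r ler_pM ?expR_ge0 //.
      by rewrite -[X in X <= _]expR0 ler_expR mulr_ge0 ?subr_ge0 ?ln_ge0.
    by rewrite ler_expR lerN2.
set C := expR ((h - 1) * ln h - (h - 1)).
have up : (\int[mu]_(x in `]0%R, +oo[%classic) f x <= (C * h)%:E)%E.
  rewrite integral_mkcond.
  apply: (@le_trans _ _ (\int[mu]_x ((C * h)%:E * (exponential_pdf h^-1 x)%:E))%E).
    apply: le_intT.
      by move=> x; rewrite /patch; case: ifP => // /[!inE] ?; exact: f0.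
    move=> x; rewrite /patch; case: ifP => [/[!inE] /=|_]; last first.
      by rewrite mule_ge0 // lee_fin ?mulr_ge0 ?expR_ge0 ?exponential_pdf_ge0 ?ltW ?invr_gt0.
    rewrite in_itv /= andbT => x0.
    rewrite /f -EFinM lee_fin exponential_pdfE; last exact: ltW.
    rewrite powR_pos //.
    rewrite /C mulrA mulfK; last by rewrite gt_eqF.
    rewrite -!expRD ler_expR.
    have := @ln_le_sub1 (x / h) (divr_gt0 x0 h0); rewrite ln_div ?posrE //.
    move=> hl; have h10 : 0 <= h - 1 by rewrite subr_ge0.
    have := ler_wpM2l h10 hl.
    have e : (h - 1) * (x / h - 1) = x - h^-1 * x - (h - 1).
      by field; rewrite gt_eqF.
    rewrite e; lra.
  rewrite ge0_integralZl //=.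
  - have hi : 0 < h^-1 by rewrite invr_gt0.
    have E := @integral_exponential_pdf R h^-1 hi.
    by rewrite E mule1.
  - apply/measurable_EFinP. exact: measurable_exponential_pdf.
  - by move=> x _; rewrite lee_fin exponential_pdf_ge0 // invr_ge0 ltW.
  - by rewrite lee_fin mulr_ge0 ?expR_ge0 // ltW.
have Ch : C * h = expR (h * ln h - h + 1).
  rewrite /C -[X in _ * X](@lnK R h) ?posrE // -expRD; congr expR; ring.
rewrite /Gamma_fn -/f -Ch; move: lo up.
case: (\int[mu]_(x in `]0%R, +oo[%classic) f x)%E => [r| |] //=; rewrite ?lee_fin.
  move=> lo up; rewrite up andbT; apply: lt_le_trans lo; exact: expR_gt0.
Qed.

Lemma chi2_lb (k : nat) (x : R) : 1 <= (k%:R : R) / 2 -> 0 < x ->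
  expR ((k%:R / 2 - 1) * ln x - x / 2 - k%:R / 2 * ln 2
        - (k%:R / 2 * ln (k%:R / 2) - k%:R / 2 + 1)) <= chi2_pdf k x.
Proof.
move=> h1 x0; rewrite /chi2_pdf x0.
set h := k%:R / 2.
have [G0 GB] := andP (@Gamma_bound h h1).
rewrite !powR_pos // ler_pdivlMr; last by rewrite mulr_gt0 ?expR_gt0.
apply: (@le_trans _ _ (expR ((h - 1) * ln x - x / 2 - h * ln 2 - (h * ln h - h + 1))
   * (expR (h * ln 2) * expR (h * ln h - h + 1)))).
  by rewrite ler_wpM2l ?expR_ge0 // ler_wpM2l ?expR_ge0.
rewrite -!expRD le_eqVlt; apply/orP; left; apply/eqP; congr expR.
ring.
Qed.

Lemma fact_ub (j : nat) :
  (j`!)%:R <= expR ((j%:R + 1) * ln (j%:R + 1) - j%:R) :> R.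
Proof.
elim: j => [|j IH]; first by rewrite fact0 add0r ln1 mulr0 subr0 expR0.
rewrite factS natrM.
apply: le_trans (ler_wpM2l (ler0n _ _) IH) _.
have p1 : (0 : R) < j%:R + 1 by have := ler0n R j; lra.
rewrite -natr1 -[X in X * _](@lnK R (j%:R + 1)) ?posrE // -expRD ler_expR.
rewrite -[(j%:R + 1 + 1)]addrA.
set m : R := j%:R.
have p2 : (0 : R) < m + (1 + 1) by rewrite /m; have := ler0n R j; lra.
have := @ln_le_sub1 ((m + 1) / (m + (1 + 1))) (divr_gt0 p1 p2).
rewrite ln_div ?posrE // => H.
have e : (m + 1) / (m + (1 + 1)) - 1 = - (m + (1 + 1))^-1.
  by field; rewrite gt_eqF.
rewrite e in H.
have H2 : 1 <= (m + (1 + 1)) * (ln (m + (1 + 1)) - ln (m + 1)).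
  have H' : (m + (1 + 1))^-1 <= ln (m + (1 + 1)) - ln (m + 1) by lra.
  by have := ler_wpM2l (ltW p2) H'; rewrite mulfV ?gt_eqF.
nra.
Qed.

Lemma expRn (x : R) (n : nat) : 0 < x -> x ^+ n = expR (n%:R * ln x).
Proof. by move=> x0; rewrite mulr_natl -lnXn // lnK // posrE exprn_gt0. Qed.

Lemma L_x (h rho x : R) : 0 < rho -> rho + 1 <= h ->
  2 * h / rho - 1 <= x <= 2 * h / rho ->
  expR (- (h * (ln rho + rho^-1 - 1)) - ln (2 * h / rho) - rho - 1)
  <= expR ((h - 1) * ln x - x / 2 - h * ln 2 - (h * ln h - h + 1)).
Proof.
move=> r0 hr /andP[xl xu]; rewrite ler_expR.
set x0 := 2 * h / rho.
have h0 : 0 < h by lra.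
have x0e : x0 = 2 * h / rho by [].
have rx0 : rho * x0 = 2 * h by rewrite x0e; field; rewrite gt_eqF.
have x01 : 1 < x0.
  have : rho * 1 < rho * x0 by rewrite rx0; lra.
  by rewrite ltr_pM2l.
have x0p : 0 < x0 by lra.
have x1p : 0 < x0 - 1 by lra.
have xp : 0 < x by lra.
have l1 : ln (x0 - 1) <= ln x by rewrite ler_ln ?posrE.
have l2 : ln x0 - ln (x0 - 1) <= (x0 - 1)^-1.
  have := @ln_le_sub1 (x0 / (x0 - 1)) (divr_gt0 x0p x1p).
  rewrite ln_div ?posrE //; move=> H; apply: le_trans H _.
  rewrite le_eqVlt; apply/orP; left; apply/eqP; field; rewrite gt_eqF.
  by [].
  exact: x1p.
have l3 : (h - 1) * (x0 - 1)^-1 <= rho.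
  rewrite ler_pdivrMr //; lra.
have l4 : (h - 1) * ln x0 - rho <= (h - 1) * ln x.
  have hm : 0 <= h - 1 by lra.
  have := ler_wpM2l hm l1; have := ler_wpM2l hm l2; lra.
have lx0 : ln x0 = ln 2 + ln h - ln rho.
  by rewrite x0e ln_div ?posrE ?mulr_gt0 // lnM ?posrE.
have rinv : rho^-1 * rho = 1 by rewrite mulVf ?gt_eqF.
have hx0 : x0 = 2 * h * rho^-1 by [].
rewrite lx0 in l4 *.
lra.
Qed.

Lemma L_y (h sig y : R) : 0 < sig -> 1 <= h ->
  2 * h * sig <= y <= 2 * h * sig + 1 ->
  expR (- (h * (sig - 1 - ln sig)) - ln (2 * h * sig) - 3 / 2)
  <= expR ((h - 1) * ln y - y / 2 - h * ln 2 - (h * ln h - h + 1)).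
Proof.
move=> s0 h1 /andP[yl yu]; rewrite ler_expR.
have y0p : 0 < 2 * h * sig by rewrite !mulr_gt0 //; lra.
have yp : 0 < y by lra.
have l1 : (h - 1) * ln (2 * h * sig) <= (h - 1) * ln y.
  by rewrite ler_wpM2l ?ler_ln ?posrE //; lra.
have ly0 : ln (2 * h * sig) = ln 2 + ln h + ln sig.
  by rewrite !lnM ?posrE ?mulr_gt0 //; lra.
rewrite ly0 in l1 *.
lra.
Qed.

Lemma L_w (lam c rho T : R) (j : nat) : 0 < rho -> 0 < c -> 0 < T ->
  lam = 2 * rho * c * T -> j%:R <= c * T < j%:R + 1 ->
  expR (- lam / 2 + c * T * ln rho + c * T - `|ln rho| - 2 - ln (c * T + 1))
  <= expR (- lam / 2) * (lam / 2) ^+ j / (j`!)%:R.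
Proof.
move=> r0 c0 T0 le /andP[jl ju].
have cT : 0 < c * T by rewrite mulr_gt0.
have l2 : lam / 2 = rho * (c * T) by rewrite le; field.
have lp : 0 < lam / 2 by rewrite l2 mulr_gt0.
have fp : (0 : R) < (j`!)%:R by rewrite ltr0n fact_gt0.
rewrite ler_pdivlMr // expRn //.
apply: (@le_trans _ _ (expR (- lam / 2 + c * T * ln rho + c * T - `|ln rho| - 2 - ln (c * T + 1))
   * expR ((j%:R + 1) * ln (j%:R + 1) - j%:R))).
  by rewrite ler_wpM2l ?expR_ge0 // fact_ub.
rewrite -!expRD ler_expR.
set m : R := j%:R.
have m0 : 0 <= m by rewrite ler0n.
have lm : ln (m + 1) <= ln (c * T + 1) by rewrite ler_ln ?posrE; lra.
have a1 : m * (ln (c * T) - ln (m + 1)) >= - 1.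
  have := @ln_le_sub1 ((m + 1) / (c * T)) (divr_gt0 (ltr_pwDr ltr01 m0) cT).
  rewrite ln_div ?posrE; [|lra|by []] => H.
  have H2 : m * (ln (m + 1) - ln (c * T)) <= m * ((m + 1) / (c * T) - 1).
    exact: ler_wpM2l.
  have H3 : m * ((m + 1) / (c * T)) <= m + 1.
    rewrite mulrA ler_pdivrMr //; nra.
  nra.
have a2 : m * ln rho >= c * T * ln rho - `|ln rho|.
  case: (lerP 0 (ln rho)) => hl.
    rewrite ger0_norm //; nra.
  rewrite ltr0_norm //; nra.
rewrite l2 lnM ?posrE //.
nra.
Qed.

Definition rateR (N M rho sig eta : R) :=
  eta / 2 - eta / (2 * rho) * ln rho - eta / (2 * rho)
  + (N + eta / (2 * rho)) * (ln rho + rho^-1 - 1) + N * M * (sig - 1 - ln sig).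

Definition errR (N M rho sig e T : R) :=
  ln (e / (2 * rho) * T + 1) + ln (T * (2 * N / rho + e / rho ^+ 2))
  + ln (2 * (N * M * T) * sig) + `|ln rho| + rho + 6.

Lemma chi2_ge0 k x : 0 <= chi2_pdf k x :> R.
Proof.
rewrite /chi2_pdf; case: ifP => // _.
have [G0 _] : 0 <= Gamma_fn (k%:R / 2 : R) /\ True.
  by split => //; rewrite /Gamma_fn fine_ge0 // integral_ge0 // => x0 _;
    rewrite lee_fin mulr_ge0 ?powR_ge0 ?expR_ge0.
by rewrite divr_ge0 ?mulr_ge0 ?powR_ge0 ?expR_ge0.
Qed.

Lemma ncchi2_ge0 k lam x : 0 <= lam -> (0 <= ncchi2_pdf k lam x :> \bar R)%E.
Proof.
move=> l0; rewrite /ncchi2_pdf; apply: nneseries_ge0 => n _ _.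
by rewrite lee_fin mulr_ge0 ?chi2_ge0 // divr_ge0 ?ler0n // mulr_ge0 ?expR_ge0 // exprn_ge0 // divr_ge0.
Qed.

Lemma pmiss_lb (NR Ns L : nat) (gamma rho sig e eta : R) :
  (1 <= NR)%N -> (2 <= Ns)%N -> 0 < gamma -> 0 < rho -> 0 < sig -> 0 < eta -> eta <= e ->
  2 * NR%:R / rho + e / rho ^+ 2 <= gamma * (2 * NR%:R * (Ns - 1)%:R * sig) ->
  rho + 1 <= NR%:R * L.+1%:R ->
  ((expR (- (L.+1%:R * rateR NR%:R (Ns - 1)%:R rho sig eta)
          - errR NR%:R (Ns - 1)%:R rho sig e L.+1%:R))%:E
   <= p_miss NR Ns L.+1 gamma eta)%E.
Proof.
move=> NR1 Ns2 g0 r0 s0 et0 ete feas LL.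
rewrite /p_miss /ncF_cdf.
set T : R := L.+1%:R.
set N : R := NR%:R.
set M : R := (Ns - 1)%:R.
have T1 : 1 <= T by rewrite /T ler1n.
have N1 : 1 <= N by rewrite /N ler1n.
have M1 : 1 <= M by rewrite /M ler1n; move: Ns2; clear; case: Ns => [|[|n]].
set c := eta / (2 * rho).
have c0 : 0 < c by rewrite divr_gt0 // mulr_gt0.
have cT0 : 0 <= c * T by rewrite mulr_ge0 ?ltW //; lra.
set j := Num.Def.trunc (c * T).
have /andP[jl ju] := truncn_itv cT0; rewrite -/j -natr1 in jl ju.
set hx : R := N * T + j%:R.
set x0 := 2 * hx / rho.
set hy : R := N * M * T.
set y0 := 2 * hy * sig.
set lam := T * eta.
have n1E : (2 * NR * L.+1)%:R = 2 * N * T :> R by rewrite !natrM.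
have n2E : (2 * NR * L.+1 * (Ns - 1))%:R = 2 * N * T * M :> R by rewrite !natrM.
have hxE : ((2 * NR * L.+1 + 2 * j)%:R / 2 : R) = hx.
  by rewrite natrD n1E natrM /hx; field.
have hyE : ((2 * NR * L.+1 * (Ns - 1))%:R / 2 : R) = hy.
  by rewrite n2E /hy; field.
have hx1 : rho + 1 <= hx by rewrite /hx; have := ler0n R j; lra.
have hy1 : 1 <= hy by rewrite /hy; nra.
set g := ln rho + rho^-1 - 1.
have gge0 : 0 <= g.
  have := @ln_le_sub1 rho^-1; rewrite lnV ?posrE // /g; move=> H.
  have ri : 0 < rho^-1 by rewrite invr_gt0.
  have := H ri; lra.
set Ew := - lam / 2 + c * T * ln rho + c * T - `|ln rho| - 2 - ln (c * T + 1).
set Ex := - (hx * g) - ln x0 - rho - 1.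
set Ey := - (hy * (sig - 1 - ln sig)) - ln y0 - 3 / 2.
have T0 : 0 < T by lra.
have Wj : expR Ew <= expR (- lam / 2) * (lam / 2) ^+ j / (j`!)%:R.
  apply: L_w => //; last by rewrite jl ju.
  by rewrite /lam /c; field; rewrite gt_eqF.
have x01 : 1 < x0.
  have : rho * 1 < rho * x0 by rewrite /x0 mulrCA divff ?gt_eqF // mulr1; lra.
  by rewrite ltr_pM2l.
have CX : forall x, x0 - 1 <= x <= x0 ->
    ((expR Ew * expR Ex)%:E <= ncchi2_pdf (2 * NR * L.+1) lam x)%E.
  move=> x /andP[xl xu].
  have xp : 0 < x by lra.
  rewrite /ncchi2_pdf.
  apply: le_trans (nneseries_lim_ge j.+1 _); last first.
    move=> n _ _; rewrite lee_fin mulr_ge0 ?chi2_ge0 // divr_ge0 ?ler0n //.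
    by rewrite mulr_ge0 ?expR_ge0 // exprn_ge0 // divr_ge0 // ltW // /lam mulr_gt0.
  rewrite big_nat_recr //=; apply: lee_paddl.
    apply: sume_ge0 => n _; rewrite lee_fin mulr_ge0 ?chi2_ge0 // divr_ge0 ?ler0n //.
    by rewrite mulr_ge0 ?expR_ge0 // exprn_ge0 // divr_ge0 // ltW // /lam mulr_gt0.
  rewrite lee_fin ler_pM ?expR_ge0 //.
  have := @chi2_lb (2 * NR * L.+1 + 2 * j) x; rewrite hxE => H.
  apply: le_trans (H _ xp); last lra.
  have := @L_x hx rho x r0 hx1; rewrite -/x0 xl xu => /(_ isT).
  by rewrite -/g.
have CY : forall y, y0 <= y <= y0 + 1 -> expR Ey <= chi2_pdf (2 * NR * L.+1 * (Ns - 1)) y.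
  move=> y /andP[yl yu].
  have yp : 0 < y by apply: lt_le_trans yl; rewrite /y0 !mulr_gt0 //; lra.
  have := @chi2_lb (2 * NR * L.+1 * (Ns - 1)) y; rewrite hyE => H.
  apply: le_trans (H hy1 yp).
  have := @L_y hy sig y s0 hy1; rewrite -/y0 yl yu => /(_ isT).
  by [].
have xy : x0 <= gamma * y0.
  have ce : 2 * c * T = T * eta * rho^-1 by rewrite /c; field; rewrite gt_eqF.
  have fe : T * rho * (2 * N / rho + e / rho ^+ 2) = 2 * N * T + T * e * rho^-1.
    by field; rewrite gt_eqF.
  have f2 : T * rho * (2 * N / rho + e / rho ^+ 2) <= T * rho * (gamma * (2 * N * M * sig)).
    by apply: ler_wpM2l => //; rewrite mulr_ge0 //; lra.
  have f3 : T * eta * rho^-1 <= T * e * rho^-1.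
    apply: ler_wpM2r; first by rewrite invr_ge0 ltW.
    by apply: ler_wpM2l => //; lra.
  have : 2 * hx <= rho * (gamma * y0).
    rewrite /hx /y0 /hy; nra.
  by move=> H; rewrite /x0 ler_pdivrMr //; lra.
have y0p : 0 < y0 by rewrite /y0 !mulr_gt0 //; lra.
have lam0 : 0 <= lam by rewrite /lam mulr_ge0 // ltW.
have IN : forall y, y0 <= y ->
   ((expR Ew * expR Ex)%:E <=
    \int[mu]_(x in [set x | (0 < x)%R /\
                               (x / (2 * NR * L.+1)%:R /
                                (y / (2 * NR * L.+1 * (Ns - 1))%:R) <=
                                M * gamma)%R])
          ncchi2_pdf (2 * NR * L.+1) lam x)%E.
  move=> y yl.
  have yp : 0 < y by lra.
  have := @int_lb _ `[x0 - 1, x0 - 1 + 1]%classic (ncchi2_pdf (2 * NR * L.+1) lam)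
    (expR Ew * expR Ex) (measurable_itv _).
  rewrite mu_box mule1; apply.
  - move=> x /=; rewrite in_itv /= => /andP[xl xu]; split; first by lra.
    rewrite n1E n2E.
    have -> : x / (2 * N * T) / (y / (2 * N * T * M)) = x * M / y.
      by field; rewrite !gt_eqF //; lra.
    rewrite ler_pdivrMr //.
    have : gamma * y0 <= gamma * y by rewrite ler_pM2l.
    move=> H1; have H2 : x <= gamma * y by lra.
    have M0 : 0 <= M by lra.
    have := ler_wpM2l M0 H2; lra.
  - by move=> x _; exact: ncchi2_ge0.
  - by rewrite mulr_ge0 ?expR_ge0.
  - move=> x /=; rewrite in_itv /= => /andP[xl xu]; apply: CX.
    rewrite xl /=; lra.
have := @int_lb `]0%R, +oo[%classic `[y0, y0 + 1]%classic
   (fun y => (chi2_pdf (2 * NR * L.+1 * (Ns - 1)) y)%:E *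
       \int[mu]_(x in [set x | (0 < x)%R /\
                               (x / (2 * NR * L.+1)%:R /
                                (y / (2 * NR * L.+1 * (Ns - 1))%:R) <=
                                M * gamma)%R])
          ncchi2_pdf (2 * NR * L.+1) lam x)%E
   (expR Ey * (expR Ew * expR Ex)) (measurable_itv _).
rewrite mu_box mule1 => H.
apply: (@le_trans _ _ ((expR Ey * (expR Ew * expR Ex))%:E)); last apply: H.
- rewrite lee_fin -!expRD ler_expR.
  have hxc : hx <= (N + c) * T by rewrite /hx; lra.
  have f1 : hx * g <= (N + c) * T * g by apply: ler_wpM2r.
  have ce : 2 * c * T = T * eta * rho^-1 by rewrite /c; field; rewrite gt_eqF.
  have fe : T * rho * (2 * N / rho + e / rho ^+ 2) = 2 * N * T + T * e * rho^-1.
    by field; rewrite gt_eqF.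
  have f3 : T * eta * rho^-1 <= T * e * rho^-1.
    apply: ler_wpM2r; first by rewrite invr_ge0 ltW.
    by apply: ler_wpM2l => //; lra.
  have x0b : x0 <= T * (2 * N / rho + e / rho ^+ 2).
    rewrite /x0 ler_pdivrMr //.
    have : 2 * hx <= T * rho * (2 * N / rho + e / rho ^+ 2) by rewrite fe /hx; lra.
    lra.
  have f2 : ln x0 <= ln (T * (2 * N / rho + e / rho ^+ 2)).
    by rewrite ler_ln ?posrE //; lra.
  have ce2 : c <= e / (2 * rho).
    by rewrite /c ler_pM2r ?invr_gt0 ?mulr_gt0.
  have f4 : ln (c * T + 1) <= ln (e / (2 * rho) * T + 1).
    rewrite ler_ln ?posrE; [|lra|].
      by rewrite lerD2r ler_pM2r.
    have : 0 <= e / (2 * rho) * T by rewrite mulr_ge0 ?divr_ge0 ?mulr_ge0 //; lra.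
    lra.
  rewrite /Ew /Ex /Ey /rateR /errR -/c -/g /y0 /hy /lam.
  lra.
- move=> y /=; rewrite !in_itv /= andbT => /andP[yl _]; lra.
- move=> y _; apply: mule_ge0; first by rewrite lee_fin chi2_ge0.
  by apply: integral_ge0 => x _; exact: ncchi2_ge0.
- by rewrite !mulr_ge0 ?expR_ge0.
- move=> y /=; rewrite in_itv /= => /andP[yl yu].
  rewrite EFinM; apply: lee_pmul; rewrite ?lee_fin ?expR_ge0 ?mulr_ge0 //.
  + by apply: CY; rewrite yl yu.
  + exact: IN.
Qed.

Lemma rate_mono (N M rho sig eta e : R) : 0 < rho -> eta <= e ->
  rateR N M rho sig eta <= rateR N M rho sig e.
Proof.
move=> r0 ee.
have -> : rateR N M rho sig e = rateR N M rho sig eta + (e - eta) * (1 - rho^-1) ^+ 2 / 2.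
  by rewrite /rateR; field; rewrite gt_eqF.
by rewrite lerDl mulr_ge0 // mulr_ge0 ?subr_ge0 ?sqr_ge0.
Qed.

Lemma rate_ge0 (N M rho sig e : R) : 0 <= N -> 0 <= M -> 0 < rho -> 0 < sig -> 0 <= e ->
  0 <= rateR N M rho sig e.
Proof.
move=> N0 M0 r0 s0 e0.
have g1 : 0 <= rho - 1 - ln rho by have := @ln_le_sub1 rho r0; lra.
have g2 : 0 <= ln rho + rho^-1 - 1.
  have := @ln_le_sub1 rho^-1; rewrite lnV ?posrE // => H.
  have ri : 0 < rho^-1 by rewrite invr_gt0.
  have := H ri; lra.
have g3 : 0 <= sig - 1 - ln sig by have := @ln_le_sub1 sig s0; lra.
have c0 : 0 <= e / (2 * rho) by rewrite divr_ge0 // mulr_ge0 // ltW.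
have -> : rateR N M rho sig e = e / (2 * rho) * (rho - 1 - ln rho)
   + (N + e / (2 * rho)) * (ln rho + rho^-1 - 1) + N * M * (sig - 1 - ln sig).
  by rewrite /rateR; field; rewrite gt_eqF.
have t1 : 0 <= e / (2 * rho) * (rho - 1 - ln rho) by rewrite mulr_ge0.
have t2 : 0 <= (N + e / (2 * rho)) * (ln rho + rho^-1 - 1) by rewrite mulr_ge0 // addr_ge0.
have t3 : 0 <= N * M * (sig - 1 - ln sig) by rewrite !mulr_ge0.
lra.
Qed.

Lemma istar_facts (NR Ns : nat) (gamma e xs : R) :
  (1 <= NR)%N -> (2 <= Ns)%N -> 0 < gamma -> 0 < e -> 0 < xs ->
  (gamma + 1) / (e * gamma) * (xs ^+ 2 - NR%:R ^+ 2) - xs - NR%:R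
    - 2 * NR%:R * (Ns - 1)%:R = 0 ->
  let N : R := NR%:R in let M : R := (Ns - 1)%:R in
  let vs := (xs ^+ 2 - N ^+ 2) / (e * gamma) in
  let rho := e / (xs - N) in let sig := vs / (2 * N * M) in
  [/\ 0 < rho, 0 < sig, 2 * N / rho + e / rho ^+ 2 <= gamma * (2 * N * M * sig)
    & Istar NR Ns e gamma xs = rateR N M rho sig e].
Proof.
move=> NR1 Ns2 g0 e0 x0 Q N M vs rho sig.
have N1 : 1 <= N by rewrite /N ler1n.
have M1 : 1 <= M by rewrite /M ler1n; move: Ns2; clear; case: Ns => [|[|n]].
have eg : 0 < e * gamma by rewrite mulr_gt0.
have Q' : (gamma + 1) * vs = xs + N + 2 * N * M.
  have -> : (gamma + 1) * vs = (gamma + 1) / (e * gamma) * (xs ^+ 2 - N ^+ 2).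
    by rewrite /vs; field; rewrite !gt_eqF.
  rewrite -/N -/M in Q; lra.
have vs0 : 0 < vs.
  have : 0 < (gamma + 1) * vs by rewrite Q'; nra.
  by rewrite pmulr_rgt0 //; lra.
have sq : 0 < xs ^+ 2 - N ^+ 2.
  by move: vs0; rewrite /vs pmulr_lgt0 // invr_gt0.
have xN : N < xs.
  move: sq; rewrite subr_gt0; move=> H; rewrite -(ltr_pXn2r (n := 2)) //; rewrite ?nnegrE; lra.
have d0 : 0 < xs - N by lra.
have r0 : 0 < rho by rewrite divr_gt0.
have s0 : 0 < sig by rewrite divr_gt0 // !mulr_gt0 //; lra.
split => //.
  have -> : gamma * (2 * N * M * sig) = gamma * vs.
    by rewrite /sig; field; apply/andP; split; rewrite gt_eqF //; lra.
  rewrite le_eqVlt; apply/orP; left; apply/eqP.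
  by rewrite /rho /vs; field; rewrite !gt_eqF //; lra.
rewrite /Istar -/N -/M -/vs.
have gev : gamma * e * vs = xs ^+ 2 - N ^+ 2 by rewrite /vs; field; rewrite !gt_eqF.
rewrite gev (addrC (N ^+ 2)) subrK sqrtr_sqr ger0_norm; last lra.
have q : gamma * vs / (N + xs) = rho^-1.
  by rewrite /rho /vs invf_div; field; rewrite !gt_eqF //; lra.
rewrite q lnV ?posrE //.
have ls : ln (2 * N * M / vs) = - ln sig.
  rewrite -lnV; last by rewrite posrE.
  congr ln; rewrite /sig /vs; field; rewrite -/N -/M !gt_eqF //; lra.
rewrite ls /rateR.
have key : (N + e / (2 * rho)) * (rho^-1 - 1) + N * M * (sig - 1) = 0.
  have -> : (N + e / (2 * rho)) * (rho^-1 - 1) + N * M * (sig - 1)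
     = ((gamma + 1) * vs - xs - N - 2 * N * M) / 2.
    rewrite /rho /sig /vs; field; rewrite !gt_eqF //; lra.
  by rewrite Q' ; field.
have e2 : e / (2 * rho) * ln rho = e / (2 * rho) * ln rho by [].
lra.
Qed.

Lemma pmiss_ge0 NR Ns L gamma (eta : R) : 0 <= eta ->
  (0 <= p_miss NR Ns L gamma eta)%E.
Proof.
move=> e0; rewrite /p_miss /ncF_cdf; apply: integral_ge0 => y _.
apply: mule_ge0; first by rewrite lee_fin chi2_ge0.
by apply: integral_ge0 => x _; apply: ncchi2_ge0; rewrite mulr_ge0.
Qed.

Lemma ln_le_K (z K : R) : 0 < z -> 0 < K -> ln z <= z / K + ln K.
Proof.
move=> z0 K0; have := @ln_le_sub1 (z / K) (divr_gt0 z0 K0).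
by rewrite ln_div ?posrE //; lra.
Qed.

End Helpers.

Arguments rateR {R}. Arguments errR {R}. Arguments pmiss_lb {R}.
Arguments rate_mono {R}. Arguments rate_ge0 {R}. Arguments istar_facts {R}.
Arguments le_intT {R}. Arguments pmiss_ge0 {R}. Arguments ln_le_K {R}.
Arguments ln_le_sub1 {R}.

Theorem proposition4 (R : realType) (NR Ns : nat) (gamma : R)
  (Omega_i : interval R) (p eta : R -> R) (Omega_m : set R) (eta_m xs : R) :
  (1 <= NR)%N -> (2 <= Ns)%N -> 0 < gamma ->
  measurable_fun [set` Omega_i] p ->
  (forall phi, [set` Omega_i] phi -> 0 <= p phi) ->
  (\int[@lebesgue_measure R]_(phi in [set` Omega_i]) (p phi)%:E = 1)%E ->
  measurable_fun [set` Omega_i] eta ->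
  (forall phi, [set` Omega_i] phi -> 0 < eta phi) ->
  measurable Omega_m -> Omega_m `<=` [set` Omega_i] ->
  0 < eta_m -> (forall phi, Omega_m phi -> eta phi <= eta_m) ->
  (0 < \int[@lebesgue_measure R]_(phi in Omega_m) (p phi)%:E)%E ->
  gamma < (2 * NR%:R + eta_m) / (2 * NR%:R * (Ns - 1)%:R) ->
  0 < xs ->
  (gamma + 1) / (eta_m * gamma) * (xs ^+ 2 - NR%:R ^+ 2) - xs - NR%:R
    - 2 * NR%:R * (Ns - 1)%:R = 0 ->
  (limn_esup (fun L : nat =>
     (- (ln (fine (pbar_miss NR Ns L.+1 gamma [set` Omega_i] p eta)) / L.+1%:R))%:E)
   <= (Istar NR Ns eta_m gamma xs)%:E)%E.
Proof.
move=> NR1 Ns2 g0 mp p0 _ _ eta0 mOm OmO em0 etam Pm _ xs0 Q.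
pose N : R := NR%:R.
pose M : R := (Ns - 1)%:R.
have N1 : 1 <= N by rewrite /N ler1n.
have M1 : 1 <= M by rewrite /M ler1n; move: Ns2; clear; case: Ns => [|[|n]].
have N0 : 0 < N by lra.
have M0 : 0 < M by lra.
pose vs := (xs ^+ 2 - N ^+ 2) / (eta_m * gamma).
pose rho := eta_m / (xs - N).
pose sig := vs / (2 * N * M).
have [r0 s0 feas IE] : [/\ 0 < rho, 0 < sig,
   2 * N / rho + eta_m / rho ^+ 2 <= gamma * (2 * N * M * sig)
   & Istar NR Ns eta_m gamma xs = rateR N M rho sig eta_m] :=
  @istar_facts R NR Ns gamma eta_m xs NR1 Ns2 g0 em0 xs0 Q.
rewrite IE; set I := rateR N M rho sig eta_m.
have I0 : 0 <= I by apply: rate_ge0 => //; lra.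
have [P' P'0 P'le] : exists2 P' : R, 0 < P' &
    (P'%:E <= \int[@lebesgue_measure R]_(phi in Omega_m) (p phi)%:E)%E.
  move: Pm; case: (\int[@lebesgue_measure R]_(phi in Omega_m) (p phi)%:E)%E => [r| |] //.
  - by rewrite lte_fin => r0'; exists r.
  - by move=> _; exists 1 => //; rewrite leey.
have LB : forall L : nat, rho + 1 <= L.+1%:R ->
  ((expR (- (L.+1%:R * I) - errR N M rho sig eta_m L.+1%:R) * P')%:E
    <= pbar_miss NR Ns L.+1 gamma [set` Omega_i] p eta)%E.
  move=> L TL.
  set W := expR (- (L.+1%:R * I) - errR N M rho sig eta_m L.+1%:R).
  have W0 : 0 <= W by exact: expR_ge0.
  have mpm : measurable_fun Omega_m (EFin \o p).
    by apply/measurable_EFinP; exact: measurable_funS mp.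
  rewrite /pbar_miss EFinM.
  apply: (@le_trans _ _ (W%:E * \int[@lebesgue_measure R]_(phi in Omega_m) (p phi)%:E)%E).
    by apply: lee_pmul => //; rewrite lee_fin // ltW.
  rewrite -ge0_integralZl //; last first.
    by move=> x Om; rewrite lee_fin p0 //; exact: OmO.
  rewrite [X in (X <= _)%E]integral_mkcond [X in (_ <= X)%E]integral_mkcond.
  apply: le_intT => phi; rewrite /patch.
    case: ifP => // /[!inE] Om; rewrite mule_ge0 // lee_fin ?p0 //; exact: OmO.
  case: ifP => [/[!inE] Om|_].
    rewrite ifT ?inE; last exact: OmO.
    apply: lee_pmul => //; rewrite ?lee_fin ?p0 //; first exact: OmO.
    have TL' : rho + 1 <= NR%:R * L.+1%:R.
      have : L.+1%:R <= NR%:R * L.+1%:R :> R.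
        by rewrite ler_peMl // ?ler0n // -/N.
      lra.
    have := @pmiss_lb R NR Ns L gamma rho sig eta_m (eta phi) NR1 Ns2 g0 r0 s0
      (eta0 _ (OmO _ Om)) (etam _ Om) feas TL'.
    apply: le_trans; rewrite lee_fin ler_expR.
    have Tp : (0 : R) <= L.+1%:R by rewrite ler0n.
    have := @rate_mono R N M rho sig (eta phi) eta_m r0 (etam _ Om).
    rewrite -/I => H; have := ler_wpM2l Tp H; rewrite /N /M; lra.
  case: ifP => // /[!inE] Om'; apply: mule_ge0; last by rewrite lee_fin p0.
  by apply: pmiss_ge0; exact: ltW (eta0 _ Om').
set u := (fun L : nat => _).
apply/lee_addgt0Pr => eps eps0.
pose A := eta_m / (2 * rho) + (2 * N / rho + eta_m / rho ^+ 2) + 2 * N * M * sig.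
have A0 : 0 < A.
  have t1 : 0 < eta_m / (2 * rho) by rewrite divr_gt0 // mulr_gt0.
  have t2 : 0 < 2 * N / rho + eta_m / rho ^+ 2.
    by rewrite addr_gt0 // divr_gt0 ?exprn_gt0 // mulr_gt0 //; lra.
  have t3 : 0 < 2 * N * M * sig.
    by apply: mulr_gt0 => //; apply: mulr_gt0 => //; apply: mulr_gt0.
  rewrite /A; lra.
pose K := 2 * A / eps + 1.
have K0 : 0 < K.
  have : 0 < 2 * A / eps by rewrite divr_gt0 // mulr_gt0.
  rewrite /K; lra.
have AK : A / K <= eps / 2.
  rewrite ler_pdivrMr // /K.
  have -> : eps / 2 * (2 * A / eps + 1) = A + eps / 2.
    by field; rewrite gt_eqF.
  lra.
pose C0 := K^-1 + 3 * ln K + `|ln rho| + rho + 6 - ln P'.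
pose B := Num.max (rho + 1) (2 * `|C0| / eps + 1).
pose n0 := Num.Def.truncn B.
have key : forall m, (n0 <= m)%N -> (u m <= (I + eps)%:E)%E.
  move=> m nm; set T : R := m.+1%:R.
  have TB : B < T.
    apply: lt_le_trans (truncnS_gt B) _.
    by rewrite /T ler_nat ltnS.
  have Tr : rho + 1 <= T by apply: ltW; apply: le_lt_trans TB; rewrite /B le_max lexx.
  have TC : 2 * `|C0| / eps + 1 <= T.
    by apply: ltW; apply: le_lt_trans TB; rewrite /B le_max lexx orbT.
  have T0 : 0 < T by lra.
  have errb : errR N M rho sig eta_m T - ln P' <= eps * T.
    have z1 : 0 < eta_m / (2 * rho) * T + 1.
      have : 0 < eta_m / (2 * rho) * T by rewrite mulr_gt0 // divr_gt0 // mulr_gt0.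
      lra.
    have z2 : 0 < T * (2 * N / rho + eta_m / rho ^+ 2).
      by rewrite mulr_gt0 // addr_gt0 // divr_gt0 ?exprn_gt0 // mulr_gt0 //; lra.
    have z3 : 0 < 2 * (N * M * T) * sig.
      by apply: mulr_gt0 => //; apply: mulr_gt0 => //; apply: mulr_gt0 => //; apply: mulr_gt0.
    have l1 := ln_le_K _ _ z1 K0.
    have l2 := ln_le_K _ _ z2 K0.
    have l3 := ln_le_K _ _ z3 K0.
    have sumK : (eta_m / (2 * rho) * T + 1) / K + T * (2 * N / rho + eta_m / rho ^+ 2) / K
        + 2 * (N * M * T) * sig / K = A / K * T + K^-1.
      by rewrite /A; field; rewrite !gt_eqF.
    have AKT : A / K * T <= eps / 2 * T by apply: ler_wpM2r => //; lra.
    have C0b : C0 <= eps / 2 * (T - 1).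
      have : 2 * `|C0| / eps <= T - 1 by lra.
      rewrite ler_pdivrMr // => H.
      have : C0 <= `|C0| by exact: ler_norm.
      lra.
    rewrite /errR /C0 in C0b *.
    lra.
  have lb := LB m Tr; rewrite -/T in lb.
  rewrite /u.
  move: lb; case: (pbar_miss NR Ns m.+1 gamma [set` Omega_i] p eta) => [r| |] /=.
  - rewrite lee_fin => lb.
    have Wp : 0 < expR (- (T * I) - errR N M rho sig eta_m T) * P'.
      by rewrite mulr_gt0 ?expR_gt0.
    have rp : 0 < r by apply: lt_le_trans lb.
    have lr : ln (expR (- (T * I) - errR N M rho sig eta_m T) * P') <= ln r.
      by rewrite ler_ln ?posrE.
    rewrite lnM ?posrE ?expR_gt0 // expRK in lr.
    rewrite lee_fin -mulNr ler_pdivrMr //.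
    have : I * T = T * I by rewrite mulrC.
    lra.
  - by move=> _; rewrite ln0 // mul0r oppr0 lee_fin; lra.
  - by move=> _; rewrite ln0 // mul0r oppr0 lee_fin; lra.
rewrite limn_esup_lim; apply: lime_le; first exact: is_cvg_esups.
exists n0 => // n /= nn0.
apply: ge_ereal_sup => _ [m /= nm <-]; apply: key.
exact: leq_trans nn0 nm.
Qed.
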